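(* Let $T$ be a CPTP map with operator-sum representation $\{M_k\}$, $\mathcal{H}_S$ an invariant subspace for which the DID construction terminates successfully, yielding $\mathcal{H}=\mathcal{H}_S\oplus\mathcal{H}_{T_1}\oplus\cdots\oplus\mathcal{H}_{T_N}$, and set $\mathcal{H}_{T_0}:=\mathcal{H}_S$. For $i=1,\dots,N$ let $\Pi_{T_j}$ be the orthogonal projection onto $\mathcal{H}_{T_j}$, $M_{k,P_i}=\Pi_{T_{i-1}}M_k|_{\mathcal{H}_{T_i}}:\mathcal{H}_{T_i}\to\mathcal{H}_{T_{i-1}}$, and $G_i=\sum_kM_{k,P_i}^\dagger M_{k,P_i}$, an operator on $\mathcal{H}_{T_i}$. Then $G_i$ is positive definite on $\mathcal{H}_{T_i}$, and for every density operator $\rho$ with $\Pi_{T_i}\rho\Pi_{T_i}=\rho$, $$\lambda_{\min}(G_i)\le \mathrm{Tr}(\Pi_{T_{i-1}}T(\rho))\le\lambda_{\max}(G_i)\le1,$$ where both bounds are attained by some such density operator.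
   Context: $\mathcal{H}$ is a finite-dimensional complex Hilbert space; $T$ is CPTP: $T(\rho)=\sum_kM_k\rho M_k^\dagger$, $\sum_kM_k^\dagger M_k=I$. A subspace $\mathcal{H}_S$ is invariant if $\rho\ge0$, $\mathrm{supp}(\rho)\subseteq\mathcal{H}_S$ implies $\mathrm{supp}(T(\rho))\subseteq\mathcal{H}_S$. DID construction: set $\mathcal{H}_{S_1}=\mathcal{H}_S$, $\mathcal{H}_{R_1}=\mathcal{H}_S^\perp$. At step $i$, let $M_{k,P'_i}=\Pi_{S_i}M_k|_{\mathcal{H}_{R_i}}:\mathcal{H}_{R_i}\to\mathcal{H}_{S_i}$ and $\mathcal{H}_{R_{i+1}}=\bigcap_k\ker(M_{k,P'_i})$. (1) If $\mathcal{H}_{R_{i+1}}=\mathcal{H}_{R_i}$, set $\mathcal{H}_{T_i}=\mathcal{H}_{R_i}$, stop (unsuccessful). (2) If $\mathcal{H}_{R_{i+1}}=\{0\}$, set $\mathcal{H}_{T_i}=\mathcal{H}_{R_i}$, stop (successful). (3) Otherwise $\mathcal{H}_{T_i}$ is the orthogonal complement of $\mathcal{H}_{R_{i+1}}$ in $\mathcal{H}_{R_i}$, $\mathcal{H}_{S_{i+1}}=\mathcal{H}_{S_i}\oplus\mathcal{H}_{T_i}$, iterate. $\lambda_{\min},\lambda_{\max}$ denote the least and largest eigenvalues. *)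

(* Defs.v *)
(* Finite-dimensional complex Hilbert space H = 'cV[C]_n,
   C an arbitrary numClosedFieldType (e.g. algC), inner product <u,v> = u^* v. *)
From HB Require Import structures.
From mathcomp Require Import all_boot all_order all_algebra.
Set Implicit Arguments. Unset Strict Implicit. Unset Printing Implicit Defensive.
Import Order.TTheory GRing.Theory Num.Theory.
Local Open Scope ring_scope.

Section Defs.
Variable C : numClosedFieldType.
Variable n : nat.

Definition adjmx (p q : nat) (A : 'M[C]_(p, q)) : 'M[C]_(q, p) :=
  (map_mx Num.conj A)^T.

Definition qform (A : 'M[C]_n) (v : 'cV[C]_n) : C := (adjmx v *m A *m v) 0 0.

Definition hermitian (A : 'M[C]_n) : Prop := adjmx A = A.

Definition psd (A : 'M[C]_n) : Prop :=
  hermitian A /\ forall v : 'cV[C]_n, 0 <= qform A v.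

Definition density (rho : 'M[C]_n) : Prop := psd rho /\ \tr rho = 1.

Definition is_proj (P : 'M[C]_n) : Prop := adjmx P = P /\ P *m P = P.

Definition in_sub (P : 'M[C]_n) (v : 'cV[C]_n) : Prop := P *m v = v.

Definition proj_onto (P : 'M[C]_n) (X : 'cV[C]_n -> Prop) : Prop :=
  is_proj P /\ forall v, in_sub P v <-> X v.

Definition channel (m : nat) (M : 'I_m -> 'M[C]_n) (rho : 'M[C]_n) : 'M[C]_n :=
  \sum_(k < m) M k *m rho *m adjmx (M k).

Definition kraus_TP (m : nat) (M : 'I_m -> 'M[C]_n) : Prop :=
  \sum_(k < m) adjmx (M k) *m M k = 1%:M.

Definition supp_in (P A : 'M[C]_n) : Prop := forall v, in_sub P (A *m v).

Definition invariant_subspace (m : nat) (M : 'I_m -> 'M[C]_n) (PS : 'M[C]_n) : Prop :=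
  forall rho, psd rho -> supp_in PS rho -> supp_in PS (channel M rho).

(* The DID construction terminates successfully after N steps, with
   Tp i the orthogonal projection onto H_{T_i} (1 <= i <= N).
   R i, Sp i are the orthogonal projections onto H_{R_i}, H_{S_i}. *)
Definition DID_success (m : nat) (M : 'I_m -> 'M[C]_n) (PS : 'M[C]_n)
    (N : nat) (Tp : nat -> 'M[C]_n) : Prop :=
  exists (R Sp : nat -> 'M[C]_n),
  [/\ Sp 1%N = PS,
      proj_onto (R 1%N) (fun v => PS *m v = 0),
      (1 <= N)%N /\
      (forall i, (1 <= i <= N)%N ->
         proj_onto (R i.+1)
           (fun v => in_sub (R i) v /\ forall k, Sp i *m (M k *m v) = 0)),
      (* case (3) at steps i < N *)
      (forall i, (1 <= i < N)%N ->
         [/\ R i.+1 <> R i, R i.+1 <> 0,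
             proj_onto (Tp i) (fun v => in_sub (R i) v /\ R i.+1 *m v = 0)
           & proj_onto (Sp i.+1)
               (fun v => exists a b, [/\ v = a + b, in_sub (Sp i) a
                                        & in_sub (Tp i) b])]) &
      (* case (2) at step N (case (1) not triggered) *)
      [/\ R N.+1 <> R N, R N.+1 = 0 & Tp N = R N]].

Definition Tproj (PS : 'M[C]_n) (Tp : nat -> 'M[C]_n) (i : nat) : 'M[C]_n :=
  if i is 0%N then PS else Tp i.

(* G_i = sum_k M_{k,P_i}^dagger M_{k,P_i}, with
   M_{k,P_i} = Pi_{T_{i-1}} M_k |_{H_{T_i}}, realized on H as
   Pi_{T_{i-1}} M_k Pi_{T_i}. *)
Definition Gop (m : nat) (M : 'I_m -> 'M[C]_n) (Pprev Pcur : 'M[C]_n) : 'M[C]_n :=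
  \sum_(k < m) adjmx (Pprev *m M k *m Pcur) *m (Pprev *m M k *m Pcur).

Definition eig_on (P G : 'M[C]_n) (l : C) : Prop :=
  exists v : 'cV[C]_n, [/\ in_sub P v, v != 0 & G *m v = l *: v].

Definition min_eig_on (P G : 'M[C]_n) (l : C) : Prop :=
  eig_on P G l /\ forall l', eig_on P G l' -> l <= l'.

Definition max_eig_on (P G : 'M[C]_n) (l : C) : Prop :=
  eig_on P G l /\ forall l', eig_on P G l' -> l' <= l.

Definition posdef_on (P G : 'M[C]_n) : Prop :=
  forall v : 'cV[C]_n, in_sub P v -> v != 0 -> 0 < qform G v.

End Defs.

(* Main.v *)
Require Import Defs.
From HB Require Import structures.
From mathcomp Require Import all_boot all_order all_algebra.
Import Order.TTheory GRing.Theory Num.Theory.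
Local Open Scope ring_scope.
Set Implicit Arguments. Unset Strict Implicit.

Lemma adjmxE (C : numClosedFieldType) p q (A : 'M[C]_(p, q)) i j :
  adjmx A i j = (A j i)^*.
Proof. by rewrite /adjmx !mxE. Qed.

Lemma adjmx_mul (C : numClosedFieldType) p q r (A : 'M[C]_(p, q)) (B : 'M[C]_(q, r)) :
  adjmx (A *m B) = adjmx B *m adjmx A.
Proof. by rewrite /adjmx map_mxM trmx_mul. Qed.

Lemma adjmxK (C : numClosedFieldType) p q (A : 'M[C]_(p, q)) : adjmx (adjmx A) = A.
Proof. by apply/matrixP => i j; rewrite !adjmxE conjCK. Qed.

Lemma adjmxD (C : numClosedFieldType) p q (A B : 'M[C]_(p, q)) :
  adjmx (A + B) = adjmx A + adjmx B.
Proof. by apply/matrixP => i j; rewrite !adjmxE !mxE ?adjmxE rmorphD. Qed.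

Lemma adjmxB (C : numClosedFieldType) p q (A B : 'M[C]_(p, q)) :
  adjmx (A - B) = adjmx A - adjmx B.
Proof. by apply/matrixP => i j; rewrite !adjmxE !mxE ?adjmxE rmorphB. Qed.

Lemma adjmxZ (C : numClosedFieldType) p q (a : C) (A : 'M[C]_(p, q)) :
  adjmx (a *: A) = a^* *: adjmx A.
Proof. by apply/matrixP => i j; rewrite !adjmxE !mxE ?adjmxE rmorphM. Qed.

Lemma adjmx1 (C : numClosedFieldType) p : adjmx (1%:M : 'M[C]_p) = 1%:M.
Proof. by apply/matrixP => i j; rewrite adjmxE !mxE eq_sym rmorph_nat. Qed.

Lemma adjmx0 (C : numClosedFieldType) p q : adjmx (0 : 'M[C]_(p, q)) = 0.
Proof. by apply/matrixP => i j; rewrite adjmxE !mxE rmorph0. Qed.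

Lemma adjmx_sum (C : numClosedFieldType) p q m (F : 'I_m -> 'M[C]_(p, q)) :
  adjmx (\sum_k F k) = \sum_k adjmx (F k).
Proof.
apply/matrixP => i j; rewrite adjmxE !summxE rmorph_sum.
by apply: eq_bigr => k _; rewrite adjmxE.
Qed.

Lemma adjmx_col (C : numClosedFieldType) p (A : 'M[C]_p) j :
  adjmx (col j A) = row j (adjmx A).
Proof. by apply/matrixP => a b; rewrite !mxE. Qed.

Definition nsq {C : numClosedFieldType} {n} (x : 'cV[C]_n) : C := (adjmx x *m x) 0 0.

Lemma nsqE (C : numClosedFieldType) n (x : 'cV[C]_n) :
  nsq x = \sum_i x i 0 * (x i 0)^*.
Proof. by rewrite /nsq mxE; apply: eq_bigr => i _; rewrite adjmxE mulrC. Qed.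

Lemma nsq_ge0 (C : numClosedFieldType) n (x : 'cV[C]_n) : 0 <= nsq x.
Proof. by rewrite nsqE; apply: sumr_ge0 => i _; exact: mul_conjC_ge0. Qed.

Lemma nsq_eq0 (C : numClosedFieldType) n (x : 'cV[C]_n) : (nsq x == 0) = (x == 0).
Proof.
apply/idP/idP; last by move/eqP->; rewrite /nsq mulmx0 mxE.
rewrite nsqE psumr_eq0 => [/allP H|i _]; last exact: mul_conjC_ge0.
apply/eqP/matrixP => i j; rewrite ord1 mxE; apply/eqP.
by rewrite -mul_conjC_eq0; apply: H; rewrite mem_index_enum.
Qed.

Lemma nsq_gt0 (C : numClosedFieldType) n (x : 'cV[C]_n) : (0 < nsq x) = (x != 0).
Proof. by rewrite lt_def nsq_ge0 andbT nsq_eq0. Qed.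

Lemma mx_ext_cV (C : numClosedFieldType) n p (A B : 'M[C]_(p, n)) :
  (forall v : 'cV[C]_n, A *m v = B *m v) -> A = B.
Proof.
move=> H; apply/matrixP => i j.
have := congr1 (fun X : 'cV[C]_p => X i 0) (H (delta_mx j 0)).
by rewrite -!colE !mxE.
Qed.

Lemma adj_tstar (C : numClosedFieldType) p q (A : 'M[C]_(p, q)) :
  (A ^t*)%sesqui = adjmx A.
Proof. by apply/matrixP => i j; rewrite adjmxE !mxE. Qed.

Lemma mx11_mul (C : numClosedFieldType) (a b : 'M[C]_1) : (a *m b) 0 0 = a 0 0 * b 0 0.
Proof. by rewrite mxE big_ord1. Qed.

Lemma dot_conj (C : numClosedFieldType) n (x y : 'cV[C]_n) :
  (adjmx y *m x) 0 0 = ((adjmx x *m y) 0 0)^*.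
Proof. by rewrite -adjmxE adjmx_mul adjmxK. Qed.

Lemma tr11 (C : numClosedFieldType) (a : 'M[C]_1) : \tr a = a 0 0.
Proof. by rewrite /mxtrace big_ord1. Qed.

Lemma mx_diag_entry (C : numClosedFieldType) p (X Y : 'M[C]_p) j :
  (X *m Y) j j = (row j X *m col j Y) 0 0.
Proof. by rewrite !mxE; apply: eq_bigr => k _; rewrite !mxE. Qed.

Lemma trace_sum (C : numClosedFieldType) n m (F : 'I_m -> 'M[C]_n) :
  \tr (\sum_k F k) = \sum_k \tr (F k).
Proof.
elim/big_rec2: _ => [|k a B _ <-]; first by rewrite mxtrace0.
by rewrite mxtraceD.
Qed.

Lemma projH (C : numClosedFieldType) n (Q : 'M[C]_n) : is_proj Q -> adjmx Q = Q.
Proof. by case. Qed.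
Lemma projI (C : numClosedFieldType) n (Q : 'M[C]_n) : is_proj Q -> Q *m Q = Q.
Proof. by case. Qed.

Lemma proj_in (C : numClosedFieldType) n (Q : 'M[C]_n) v : is_proj Q -> in_sub Q (Q *m v).
Proof. by move=> hQ; rewrite /in_sub mulmxA projI. Qed.

Lemma adj_in (C : numClosedFieldType) n (Q : 'M[C]_n) (a : 'cV[C]_n) :
  is_proj Q -> in_sub Q a -> adjmx a *m Q = adjmx a.
Proof. by move=> hQ ha; rewrite -[in RHS]ha adjmx_mul (projH hQ). Qed.

Lemma proj_perp (C : numClosedFieldType) n (Q : 'M[C]_n) (a w : 'cV[C]_n) :
  is_proj Q -> Q *m w = 0 -> in_sub Q a -> adjmx a *m w = 0.
Proof. by move=> hQ hw ha; rewrite -(adj_in hQ ha) -mulmxA hw mulmx0. Qed.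

Lemma nsq_proj_le (C : numClosedFieldType) n (Q : 'M[C]_n) (y : 'cV[C]_n) :
  is_proj Q -> nsq (Q *m y) <= nsq y.
Proof.
move=> hQ.
have E : adjmx y *m y = adjmx (Q *m y) *m (Q *m y) + adjmx (y - Q *m y) *m (y - Q *m y).
  rewrite adjmx_mul (projH hQ) adjmxB adjmx_mul (projH hQ).
  rewrite mulmxBl !mulmxBr !mulmxA -[adjmx y *m Q *m Q]mulmxA (projI hQ).
  by rewrite subrr subr0 addrC subrK.
have -> : nsq y = nsq (Q *m y) + nsq (y - Q *m y) by rewrite /nsq E mxE.
by rewrite lerDl nsq_ge0.
Qed.

Lemma qform_gram (C : numClosedFieldType) n m (A : 'I_m -> 'M[C]_n) (x : 'cV[C]_n) :
  qform (\sum_k adjmx (A k) *m A k) x = \sum_k nsq (A k *m x).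
Proof.
rewrite /qform mulmx_sumr mulmx_suml summxE; apply: eq_bigr => k _.
by rewrite /nsq adjmx_mul !mulmxA.
Qed.

Lemma qform_nsq (C : numClosedFieldType) n (x : 'cV[C]_n) : qform 1%:M x = nsq x.
Proof. by rewrite /qform mulmx1. Qed.

Definition rhox {C : numClosedFieldType} {n} (x : 'cV[C]_n) : 'M[C]_n :=
  (nsq x)^-1 *: (x *m adjmx x).

Lemma rhox_density (C : numClosedFieldType) n (x : 'cV[C]_n) : x != 0 -> density (rhox x).
Proof.
move=> x0; have nx : 0 < nsq x by rewrite nsq_gt0.
have ci : 0 <= (nsq x)^-1 by rewrite invr_ge0 ltW.
split; last first.
  rewrite /rhox mxtraceZ mxtrace_mulC tr11 -/(nsq x) mulVf //.
  by rewrite gt_eqF.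
split.
  by rewrite /Defs.hermitian /rhox adjmxZ adjmx_mul adjmxK geC0_conj.
move=> v; rewrite /qform /rhox -scalemxAr -scalemxAl mxE.
apply: mulr_ge0 => //.
rewrite !mulmxA -(mulmxA (adjmx v *m x)) mx11_mul dot_conj mulrC.
exact: mul_conjC_ge0.
Qed.

Lemma rhox_in (C : numClosedFieldType) n (P : 'M[C]_n) (x : 'cV[C]_n) :
  is_proj P -> in_sub P x -> P *m rhox x *m P = rhox x.
Proof.
move=> hP hx; rewrite /rhox -scalemxAr -scalemxAl.
by rewrite mulmxA hx -mulmxA (adj_in hP hx).
Qed.

Lemma rhox_tr (C : numClosedFieldType) n (G : 'M[C]_n) (x : 'cV[C]_n) :
  \tr (G *m rhox x) = qform G x / nsq x.
Proof.
rewrite /rhox -scalemxAr mxtraceZ mulmxA mxtrace_mulC tr11 mulrC /qform.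
by rewrite mulmxA.
Qed.

Lemma trace_channel (C : numClosedFieldType) n m (M : 'I_m -> 'M[C]_n) (P P' rho : 'M[C]_n) :
  is_proj P -> is_proj P' -> P *m rho *m P = rho ->
  \tr (P' *m channel M rho) = \tr (Gop M P' P *m rho).
Proof.
move=> hP hP' hr; rewrite /channel /Gop mulmx_sumr mulmx_suml !trace_sum.
apply: eq_bigr => k _.
rewrite -{1}hr !mulmxA mxtrace_mulC !mulmxA mxtrace_mulC !mulmxA.
rewrite !adjmx_mul (projH hP) (projH hP').
by rewrite mulmxA -(mulmxA _ P' P') (projI hP').
Qed.

Lemma seq_min (C : numClosedFieldType) (T : eqType) (f : T -> C) (s : seq T) :
  (forall j, f j \is Num.real) -> s != [::] ->
  exists2 x, x \in s & forall y, y \in s -> f x <= f y.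
Proof.
move=> fr; elim: s => [//|a s IH] _.
case: s IH => [|b s] IH.
  by exists a => [|y]; rewrite ?mem_head // inE => /eqP->.
have [x xs hx] := IH isT.
have /orP[hax|hxa] := real_leVge (fr a) (fr x).
  exists a; first exact: mem_head.
  move=> y; rewrite inE => /orP[/eqP->//|ys].
  exact: le_trans hax (hx _ ys).
exists x; first by rewrite inE xs orbT.
by move=> y; rewrite inE => /orP[/eqP->//|ys]; exact: hx.
Qed.

Lemma exists_min (C : numClosedFieldType) n (f : 'I_n -> C) (p : pred 'I_n) :
  (forall j, f j \is Num.real) -> (exists j, p j) ->
  exists j0, p j0 /\ forall j, p j -> f j0 <= f j.
Proof.
move=> fr [j pj].
have ne : [seq j <- enum 'I_n | p j] != [::].
  apply/eqP => E; have : j \in [seq j <- enum 'I_n | p j] by rewrite mem_filter pj mem_enum.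
  by rewrite E.
have [x] := seq_min fr ne; rewrite mem_filter => /andP[px _] hx.
exists x; split => // y py; apply: hx; by rewrite mem_filter py mem_enum.
Qed.

Lemma exists_max (C : numClosedFieldType) n (f : 'I_n -> C) (p : pred 'I_n) :
  (forall j, f j \is Num.real) -> (exists j, p j) ->
  exists j0, p j0 /\ forall j, p j -> f j <= f j0.
Proof.
move=> fr hp; have fr' : forall j, - f j \is Num.real by move=> j; rewrite realN.
have [x [px hx]] := exists_min fr' hp.
by exists x; split => // y py; rewrite -lerN2 hx.
Qed.

Lemma abstract_main (C : numClosedFieldType) n m (M : 'I_m -> 'M[C]_n) (P P' : 'M[C]_n) :
  kraus_TP M -> is_proj P -> is_proj P' -> P != 0 ->
  (forall x, in_sub P x -> x != 0 -> exists k, P' *m (M k *m x) != 0) ->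
  posdef_on P (Gop M P' P) /\
  exists lmin lmax : C,
  [/\ min_eig_on P (Gop M P' P) lmin /\ max_eig_on P (Gop M P' P) lmax,
      (forall rho, density rho -> P *m rho *m P = rho ->
         lmin <= \tr (P' *m channel M rho) <= lmax),
      lmax <= 1,
      (exists rho, [/\ density rho, P *m rho *m P = rho &
         \tr (P' *m channel M rho) = lmin])
    & (exists rho, [/\ density rho, P *m rho *m P = rho &
         \tr (P' *m channel M rho) = lmax])].
Proof.
move=> hK hP hP' P0 hx.
set G := Gop M P' P.
have qG : forall x, qform G x = \sum_k nsq (P' *m M k *m P *m x).
  by move=> x; rewrite /G /Gop qform_gram.
have psdG : forall x, 0 <= qform G x.
  by move=> x; rewrite qG sumr_ge0 // => k _; exact: nsq_ge0.
have posG : posdef_on P G.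
  move=> x hxP x0; have [k hk] := hx x hxP x0.
  rewrite qG (bigD1 k) //=.
  have h : 0 < nsq (P' *m M k *m P *m x) by rewrite nsq_gt0 -mulmxA hxP -mulmxA.
  apply: (lt_le_trans h); rewrite lerDl sumr_ge0 // => j _; exact: nsq_ge0.
have Gle : forall x, qform G x <= nsq x.
  move=> x; rewrite qG; apply: (@le_trans _ _ (\sum_k nsq (M k *m (P *m x)))).
    by apply: ler_sum => k _; rewrite -!mulmxA; exact: nsq_proj_le.
  rewrite -(qform_gram M) hK qform_nsq; exact: nsq_proj_le.
have hermG : adjmx G = G.
  rewrite /G /Gop adjmx_sum; apply: eq_bigr => k _; by rewrite adjmx_mul adjmxK.
have GP : G *m P = G.
  rewrite /G /Gop mulmx_suml; apply: eq_bigr => k _.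
  by rewrite -mulmxA -(mulmxA _ P P) (projI hP).
have PG : P *m G = G.
  by rewrite -[in LHS]hermG -[in LHS](projH hP) -adjmx_mul GP hermG.
have normG : G \is normalmx by apply/normalmxP; rewrite adj_tstar hermG.
have /orthomx_spectralP hG := normG.
set U := spectralmx G in hG; set d := spectral_diag G in hG.
have Uu : U \is unitarymx := spectral_unitarymx G.
set V := adjmx U.
have UV : U *m V = 1%:M by move/unitarymxP: Uu; rewrite adj_tstar.
have iU : invmx U = V by rewrite invmx_unitary // adj_tstar.
have VU : V *m U = 1%:M by rewrite -iU mulVmx // spectral_unit.
rewrite iU in hG.
have UGV : U *m G *m V = diag_mx d.
  by rewrite hG !mulmxA UV mul1mx -mulmxA UV mulmx1.
pose v j := col j V.
have eE : forall (A : 'M_n) j, (U *m A *m V) j j = qform A (v j).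
  by move=> A j; rewrite mx_diag_entry row_mul /qform /v adjmx_col /V adjmxK.
have dE : forall j, d 0 j = qform G (v j).
  by move=> j; rewrite -eE UGV mxE eqxx mulr1n.
have d0 : forall j, 0 <= d 0 j by move=> j; rewrite dE.
have dreal : forall j, d 0 j \is Num.real by move=> j; rewrite ger0_real.
have nv : forall j, nsq (v j) = 1.
  by move=> j; rewrite -qform_nsq -eE mulmx1 UV mxE eqxx.
have v0 : forall j, v j != 0 by move=> j; rewrite -nsq_eq0 nv oner_eq0.
have GV : G *m V = V *m diag_mx d by rewrite hG -!mulmxA UV mulmx1.
have Gv : forall j, G *m v j = d 0 j *: v j.
  move=> j; apply/matrixP => a b; rewrite ord1 {b}.
  have -> : G *m v j = col j (G *m V) by rewrite /v !colE mulmxA.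
  by rewrite GV mul_mx_diag !mxE mulrC.
have inP : forall j, d 0 j != 0 -> in_sub P (v j).
  move=> j dj; rewrite /in_sub.
  have -> : v j = (d 0 j)^-1 *: (G *m v j) by rewrite Gv scalerA mulVf // scale1r.
  by rewrite -scalemxAr mulmxA PG.
have w0 : forall j rho, d 0 j = 0 -> P *m rho *m P = rho -> (U *m rho *m V) j j = 0.
  move=> j rho dj hr.
  have Pv : P *m v j = 0.
    apply/eqP; apply: contraT => hne.
    have := posG (P *m v j) (@proj_in _ _ P (v j) hP) hne.
    have GPv : G *m (P *m v j) = 0 by rewrite mulmxA GP Gv dj scale0r.
    by rewrite /qform -mulmxA GPv mulmx0 mxE ltxx.
  have E : P *m rho *m P *m v j = 0 by rewrite -mulmxA Pv mulmx0.
  by rewrite eE /qform -hr -mulmxA E mulmx0 mxE.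
have trsum : forall rho, \tr (G *m rho) = \sum_j d 0 j * (U *m rho *m V) j j.
  move=> rho; have -> : G *m rho = V *m (diag_mx d *m (U *m rho)) by rewrite hG !mulmxA.
  rewrite mxtrace_mulC /mxtrace; apply: eq_bigr => j _.
  by rewrite -(mulmxA (diag_mx d)) mul_diag_mx [LHS]mxE.
have wsum : forall rho, \sum_j (U *m rho *m V) j j = \tr rho.
  move=> rho; rewrite -[LHS]/(\tr (U *m rho *m V)).
  by rewrite mxtrace_mulC mulmxA VU mul1mx.
have wge : forall rho j, psd rho -> 0 <= (U *m rho *m V) j j.
  by move=> rho j [_ h]; rewrite eE.
have [x [xP x0]] : exists x, in_sub P x /\ x != 0.
  case: (boolP [exists a, exists b, P a b != 0]) => [/existsP[a /existsP[b hab]]|/existsPn H].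
    exists (P *m delta_mx b 0); split; first exact: proj_in.
    apply/eqP => E; move/eqP: hab; apply.
    by have := congr1 (fun X : 'cV[C]_n => X a 0) E; rewrite -colE !mxE.
  exfalso; move/eqP: P0; apply; apply/matrixP => a b; rewrite mxE.
  by move: (H a) => /existsPn/(_ b); rewrite negbK => /eqP.
have hasj : exists j, d 0 j != 0.
  case: (boolP [exists j, d 0 j != 0]) => [/existsP//|/existsPn H].
  have h1 : \tr (G *m rhox x) = 0.
    by rewrite trsum big1 // => j _; move: (H j); rewrite negbK => /eqP->; rewrite mul0r.
  have h2 : 0 < \tr (G *m rhox x) by rewrite rhox_tr divr_gt0 ?posG // nsq_gt0.
  by rewrite h1 ltxx in h2.
have [j0 [dj0 hj0]] := @exists_min _ _ (fun j => d 0 j) (fun j => d 0 j != 0) dreal hasj.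
have [j1 [dj1 hj1]] := @exists_max _ _ (fun j => d 0 j) (fun j => d 0 j != 0) dreal hasj.
have bound : forall rho, density rho -> P *m rho *m P = rho ->
    d 0 j0 <= \tr (G *m rho) <= d 0 j1.
  move=> rho [pr tr1] hr; rewrite trsum.
  have E : forall c, c = \sum_j c * (U *m rho *m V) j j.
    by move=> c; rewrite -mulr_sumr wsum tr1 mulr1.
  apply/andP; split.
    rewrite [X in X <= _](E (d 0 j0)); apply: ler_sum => j _.
    case: (eqVneq (d 0 j) 0) => dj; first by rewrite (w0 j rho dj hr) !mulr0.
    by apply: ler_wpM2r; [exact: wge | exact: hj0].
  rewrite [X in _ <= X](E (d 0 j1)); apply: ler_sum => j _.
  case: (eqVneq (d 0 j) 0) => dj; first by rewrite (w0 j rho dj hr) !mulr0.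
  by apply: ler_wpM2r; [exact: wge | exact: hj1].
have eigtr : forall l y, in_sub P y -> y != 0 -> G *m y = l *: y ->
    d 0 j0 <= l <= d 0 j1.
  move=> l y yP y0 Gy.
  have := bound (rhox y) (rhox_density y0) (rhox_in hP yP).
  rewrite rhox_tr.
  have -> : qform G y = l * nsq y by rewrite /qform -mulmxA Gy -scalemxAr mxE.
  by rewrite mulfK ?nsq_eq0.
split => //; exists (d 0 j0), (d 0 j1); split.
- split; split.
  + by exists (v j0); split; [exact: inP | exact: v0 | exact: Gv].
  + by move=> l [y [yP y0 Gy]]; have /andP[] := eigtr l y yP y0 Gy.
  + by exists (v j1); split; [exact: inP | exact: v0 | exact: Gv].
  + by move=> l [y [yP y0 Gy]]; have /andP[] := eigtr l y yP y0 Gy.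
- by move=> rho hd hr; rewrite (@trace_channel _ _ _ M P P' rho hP hP' hr); exact: bound.
- by rewrite dE; apply: le_trans (Gle _) _; rewrite nv.
- exists (rhox (v j0)); split; [exact: rhox_density | exact: (rhox_in hP (inP j0 dj0)) |].
  rewrite (@trace_channel _ _ _ M P P' _ hP hP' (rhox_in hP (inP j0 dj0))).
  by rewrite rhox_tr nv divr1 dE.
- exists (rhox (v j1)); split; [exact: rhox_density | exact: (rhox_in hP (inP j1 dj1)) |].
  rewrite (@trace_channel _ _ _ M P P' _ hP hP' (rhox_in hP (inP j1 dj1))).
  by rewrite rhox_tr nv divr1 dE.
Qed.

Lemma DID_facts (C : numClosedFieldType) (n m : nat)
    (M : 'I_m -> 'M[C]_n) (PS : 'M[C]_n) (N : nat) (Tp : nat -> 'M[C]_n) (i : nat) :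
  is_proj PS -> DID_success M PS N Tp -> (1 <= i <= N)%N ->
  [/\ is_proj (Tproj PS Tp i), is_proj (Tproj PS Tp i.-1), Tproj PS Tp i != 0 &
     forall x, in_sub (Tproj PS Tp i) x -> x != 0 ->
       exists k, Tproj PS Tp i.-1 *m (M k *m x) != 0].
Proof.
move=> hPS [R [Sp [hS1 hR1 [hN1 hR] h3 [hNne hNz hTN]]]] hiN.
have /andP[i1 iN] := hiN.
have projR : forall j, (1 <= j <= N.+1)%N -> is_proj (R j).
  case=> [//|j] /andP[_ jN]; case: j jN => [|j] jN; first by case: hR1.
  by have [] := hR j.+1 jN.
have projSp : forall j, (1 <= j <= N)%N -> is_proj (Sp j).
  case=> [//|[|j]] hj; first by rewrite hS1.
  by case: (h3 j.+1 hj) => _ _ _ [].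
have projTp : forall j, (1 <= j <= N)%N -> is_proj (Tp j).
  move=> j /andP[j1 jN]; case: (ltnP j N) => jlt.
    have hj : (1 <= j < N)%N by rewrite j1 jlt.
    by case: (h3 j hj) => _ _ [].
  have -> : j = N by apply/eqP; rewrite eqn_leq jN.
  by rewrite hTN; apply: projR; rewrite hN1 leqnSn.
have Ti : Tproj PS Tp i = Tp i by rewrite /Tproj; case: (i) i1 => [//|j].
have Tnz : Tp i != 0.
  case: (ltnP i N) => ilt.
    have hi : (1 <= i < N)%N by rewrite i1 ilt.
    have [hne _ [_ hTX] _] := h3 i hi.
    apply/eqP => T0; apply: hne.
    have hRi : is_proj (R i) by apply: projR; rewrite i1 (leq_trans iN).
    have [hRs hR1X] := hR i hiN.
    have RR : R i *m R i.+1 = R i.+1.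
      apply: mx_ext_cV => w; rewrite -mulmxA.
      by have [h _] := (hR1X (R i.+1 *m w)).1 (proj_in w hRs).
    have RR' : R i.+1 *m R i = R i.+1.
      by rewrite -(projH hRi) -(projH hRs) -adjmx_mul RR.
    apply: mx_ext_cV => w; set y := R i *m w.
    have hb : in_sub (Tp i) (y - R i.+1 *m y).
      apply/hTX; split.
        by rewrite /in_sub mulmxBr (mulmxA (R i) (R i.+1)) RR mulmxA (projI hRi).
      by rewrite mulmxBr (mulmxA (R i.+1) (R i.+1)) (projI hRs) subrr.
    move: hb; rewrite /in_sub T0 mul0mx => /esym/eqP; rewrite subr_eq0 => /eqP E.
    by rewrite E /y mulmxA RR'.
  have iN' : i = N by apply/eqP; rewrite eqn_leq iN ilt.
  apply/eqP => T0; apply: hNne; by rewrite hNz -hTN -iN' T0.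
split.
- by rewrite Ti; apply: projTp.
- rewrite /Tproj; case E: i.-1 => [|j]; first exact: hPS.
  apply: projTp; rewrite /= -E; case: (i) i1 iN => [//|j'] _ /=.
  by move=> h; apply: leq_trans h; exact: leqnSn.
- by rewrite Ti.
move=> x; rewrite Ti => hx x0.
have [hRi hnR] : in_sub (R i) x /\ ~ in_sub (R i.+1) x.
  case: (ltnP i N) => ilt.
    have hi : (1 <= i < N)%N by rewrite i1 ilt.
    have [_ _ [_ hTX] _] := h3 i hi.
    have [h1 h2] := (hTX x).1 hx; split => // h.
    by move/eqP: x0; apply; rewrite -h h2.
  have iN' : i = N by apply/eqP; rewrite eqn_leq iN ilt.
  rewrite iN' hTN in hx; rewrite iN'; split => // h.
  by move: h; rewrite /in_sub hNz mul0mx => h; move/eqP: x0; apply.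
have [k hk] : exists k, Sp i *m (M k *m x) != 0.
  case: (boolP [exists k, Sp i *m (M k *m x) != 0]) => [/existsP//|/existsPn H].
  exfalso; apply: hnR; have [_ hX] := hR i hiN; apply/hX; split => // k.
  by move: (H k); rewrite negbK => /eqP.
exists k.
rewrite /Tproj; case E: i.-1 => [|j].
  have i1e : i = 1%N by case: (i) i1 E => [|[|]].
  by rewrite i1e hS1 in hk.
have iE : i = j.+2 by case: (i) i1 E => [|[|j']] //= _ ->.
have hj1 : (1 <= j.+1 <= N)%N by rewrite /=; apply: leq_trans iN; rewrite iE.
have hj2 : (1 <= j.+1 < N)%N by rewrite /= -iE.
have [_ hXj] := hR j.+1 hj1.
rewrite iE in hRi.
have [_ hSw] := (hXj x).1 hRi.
have [_ _ [hTpj _] [hSpi hSX]] := h3 j.+1 hj2.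
have hSj := projSp j.+1 hj1.
apply/negP => /eqP Tw.
set y := Sp j.+2 *m (M k *m x).
have [a [b [ya ha hb]]] := (hSX y).1 (proj_in _ hSpi).
have : nsq y = 0.
  rewrite /nsq {2}/y mulmxA (adj_in hSpi (proj_in _ hSpi)).
  by rewrite -/y ya adjmxD mulmxDl (proj_perp hSj (hSw k) ha) (proj_perp hTpj Tw hb) addr0 mxE.
move/eqP; rewrite nsq_eq0 => /eqP y0.
by move: hk; rewrite iE -/y y0 eqxx.
Qed.

Unset Implicit Arguments.

Theorem mainTheorem6 (C : numClosedFieldType) (n m : nat)
    (M : 'I_m -> 'M[C]_n) (PS : 'M[C]_n) (N : nat) (Tp : nat -> 'M[C]_n) :
  kraus_TP M ->
  is_proj PS ->
  invariant_subspace M PS ->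
  DID_success M PS N Tp ->
  forall i : nat, (1 <= i <= N)%N ->
  let G := Gop M (Tproj PS Tp i.-1) (Tproj PS Tp i) in
  posdef_on (Tproj PS Tp i) G /\
  exists lmin lmax : C,
  [/\ min_eig_on (Tproj PS Tp i) G lmin /\
      max_eig_on (Tproj PS Tp i) G lmax,
      (forall rho : 'M[C]_n, density rho ->
         Tproj PS Tp i *m rho *m Tproj PS Tp i = rho ->
         lmin <= \tr (Tproj PS Tp i.-1 *m channel M rho) <= lmax),
      lmax <= 1,
      (exists rho : 'M[C]_n, [/\ density rho,
         Tproj PS Tp i *m rho *m Tproj PS Tp i = rho &
         \tr (Tproj PS Tp i.-1 *m channel M rho) = lmin])
    & (exists rho : 'M[C]_n, [/\ density rho,
         Tproj PS Tp i *m rho *m Tproj PS Tp i = rho &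
         \tr (Tproj PS Tp i.-1 *m channel M rho) = lmax])].
Proof.
move=> hK hPS _ hD i hi G.
have [h1 h2 h3 h4] := DID_facts hPS hD hi.
exact: (abstract_main hK h1 h2 h3 h4).
Qed.
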